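(* Let $n=3$, $s_0,s_1,s_2,b_0,b_1,b_2\in\mathbb{R}$, $S=s_0+s_1+s_2$, and assume (C1)–(C21) hold. Then the conjunction of the rules (R1), (R2$_0$) and (R3$_0$) is equivalent to the conjunction of the following statements: (i) If $b_0=\frac12$, then (C4), (C8), (C10), (C11) are strict. (ii) If $b_1=\frac12$, then (C3), (C7), (C9), (C11) are strict. (iii) If $b_2=\frac12$, then (C2), (C6), (C9), (C10) are strict. (iv) If $b_0+b_1=1$, or $b_0+b_2=1$, or $b_1+b_2=1$, or $b_0+b_1+b_2=1$, then (C5) is strict. (v) If $b_0+b_1=\frac12$ then (C6) is strict; if $b_0+b_2=\frac12$ then (C7) is strict; if $b_1+b_2=\frac12$ then (C8) is strict. (vi) If $s_0-b_0$ equals one of $\frac52-2(b_0+b_1+b_2)$, $\frac32-2(b_0+b_1)$, $\frac32-2(b_0+b_2)$, $\frac12-2b_0$, $\frac12$, $\frac32-2b_0$, then (C13) is strict. (vii) If one of (C5)–(C12) is an equality, then (C16) and (C19) are strict.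
   Context: Conditions, with $S=s_0+s_1+s_2$: (C1) $b_0+b_1+b_2\ge\frac12$; (C2) $b_0+b_1\ge0$; (C3) $b_0+b_2\ge0$; (C4) $b_1+b_2\ge0$; (C5) $S\ge 2-(b_0+b_1+b_2)$; (C6) $S\ge\frac32-(b_0+b_1)$; (C7) $S\ge\frac32-(b_0+b_2)$; (C8) $S\ge\frac32-(b_1+b_2)$; (C9) $S\ge1-b_0$; (C10) $S\ge1-b_1$; (C11) $S\ge 1-b_2$; (C12) $S\ge1$; (C13) $s_0+b_0+2s_1+2s_2\ge\frac32$; (C14) $2s_0+s_1+b_1+2s_2\ge\frac32$; (C15) $2s_0+2s_1+s_2+b_2\ge\frac32$; (C16) $s_1+s_2\ge-b_0$; (C17) $s_0+s_2\ge-b_1$; (C18) $s_0+s_1\ge-b_2$; (C19) $s_1+s_2\ge0$; (C20) $s_0+s_2\ge0$; (C21) $s_0+s_1\ge0$. ''Strict'' means the inequality holds with $>$. Rules: (R1) It is not the case that both $b_0+b_1+b_2=\tfrac12$ and $b_0+b_1+b_2=\max(b_0,b_1,b_2)$. (R2$_0$) At most one of the following is an equality: (E1) $S\ge 2-(b_0+b_1+b_2)$; (E2) $S\ge \tfrac32+\max(-b_0-b_1,-b_0-b_2,-b_1-b_2)$; (E3) $S\ge 1+\max(-b_0,-b_1,-b_2,0)$; (E4$_0$) $S\ge s_0+\max(0,-b_0)$. (R3$_0$) At most one of the following is an equality: (E1), (E2), (E3), (E5$_0$) $S\ge \tfrac34+\tfrac{s_0-b_0}{2}$, (E6$_0$)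 $S\ge s_0$. *)

(* Defs.v *)
From Stdlib Require Import Reals Lra List.
Open Scope R_scope.

Definition Ssum (s0 s1 s2 : R) : R := s0 + s1 + s2.

(* Condition (Ck) is "lhs >= rhs"; cond k returns (lhs, rhs). *)
Definition cond (k : nat) (s0 s1 s2 b0 b1 b2 : R) : R * R :=
  let S := Ssum s0 s1 s2 in
  match k with
  | 1  => (b0 + b1 + b2, 1/2)
  | 2  => (b0 + b1, 0)
  | 3  => (b0 + b2, 0)
  | 4  => (b1 + b2, 0)
  | 5  => (S, 2 - (b0 + b1 + b2))
  | 6  => (S, 3/2 - (b0 + b1))
  | 7  => (S, 3/2 - (b0 + b2))
  | 8  => (S, 3/2 - (b1 + b2))
  | 9  => (S, 1 - b0)
  | 10 => (S, 1 - b1)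
  | 11 => (S, 1 - b2)
  | 12 => (S, 1)
  | 13 => (s0 + b0 + 2*s1 + 2*s2, 3/2)
  | 14 => (2*s0 + s1 + b1 + 2*s2, 3/2)
  | 15 => (2*s0 + 2*s1 + s2 + b2, 3/2)
  | 16 => (s1 + s2, - b0)
  | 17 => (s0 + s2, - b1)
  | 18 => (s0 + s1, - b2)
  | 19 => (s1 + s2, 0)
  | 20 => (s0 + s2, 0)
  | 21 => (s0 + s1, 0)
  | _  => (0, 0)
  end.

Definition holds (k : nat) s0 s1 s2 b0 b1 b2 : Prop :=
  let p := cond k s0 s1 s2 b0 b1 b2 in fst p >= snd p.
Definition strict (k : nat) s0 s1 s2 b0 b1 b2 : Prop :=
  let p := cond k s0 s1 s2 b0 b1 b2 in fst p > snd p.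
Definition equality (k : nat) s0 s1 s2 b0 b1 b2 : Prop :=
  let p := cond k s0 s1 s2 b0 b1 b2 in fst p = snd p.

Fixpoint at_most_one (l : list Prop) : Prop :=
  match l with
  | nil => True
  | P :: l' => (P -> Forall (fun Q => ~ Q) l') /\ at_most_one l'
  end.

Definition Rule1 (b0 b1 b2 : R) : Prop :=
  ~ (b0 + b1 + b2 = 1/2 /\ b0 + b1 + b2 = Rmax b0 (Rmax b1 b2)).

(* The inequalities (E1)-(E6_0), as equalities *)
Definition E1eq s0 s1 s2 b0 b1 b2 : Prop :=
  Ssum s0 s1 s2 = 2 - (b0 + b1 + b2).
Definition E2eq s0 s1 s2 b0 b1 b2 : Prop :=
  Ssum s0 s1 s2 = 3/2 + Rmax (- b0 - b1) (Rmax (- b0 - b2) (- b1 - b2)).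
Definition E3eq s0 s1 s2 b0 b1 b2 : Prop :=
  Ssum s0 s1 s2 = 1 + Rmax (- b0) (Rmax (- b1) (Rmax (- b2) 0)).
Definition E4_0eq s0 s1 s2 b0 (b1 b2 : R) : Prop :=
  Ssum s0 s1 s2 = s0 + Rmax 0 (- b0).
Definition E5_0eq s0 s1 s2 b0 (b1 b2 : R) : Prop :=
  Ssum s0 s1 s2 = 3/4 + (s0 - b0) / 2.
Definition E6_0eq s0 s1 s2 (b0 b1 b2 : R) : Prop :=
  Ssum s0 s1 s2 = s0.

Definition Rule2_0 s0 s1 s2 b0 b1 b2 : Prop :=
  at_most_one (E1eq s0 s1 s2 b0 b1 b2 :: E2eq s0 s1 s2 b0 b1 b2 ::
               E3eq s0 s1 s2 b0 b1 b2 :: E4_0eq s0 s1 s2 b0 b1 b2 :: nil).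

Definition Rule3_0 s0 s1 s2 b0 b1 b2 : Prop :=
  at_most_one (E1eq s0 s1 s2 b0 b1 b2 :: E2eq s0 s1 s2 b0 b1 b2 ::
               E3eq s0 s1 s2 b0 b1 b2 :: E5_0eq s0 s1 s2 b0 b1 b2 ::
               E6_0eq s0 s1 s2 b0 b1 b2 :: nil).

(* Main.v *)
Require Import Defs.
From Stdlib Require Import Reals List.
Open Scope R_scope.

From Stdlib Require Import Lra Lia Setoid.

Ltac sdisj := first [lra | left; lra | right; sdisj].

Ltac destr_one X := lazymatch type of X with
  | or _ _ => let Y := fresh in destruct X as [Y|Y]; [destr_one Y | destr_one Y]
  | _ => idtac end.
Ltac clear_props := repeat match goal with
  | H : ~ _ |- _ => clear H
  | H : ?P -> ?Q |- _ => clear H end.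
Ltac kill N := apply N; clear_props; split; sdisj.
Ltac bk H := let h := fresh in pose proof (H ltac:(clear_props; sdisj)) as h; clear_props;
  repeat match goal with X : _ /\ _ |- _ => destruct X end; lra.

Lemma amo4 (A B C D : Prop) : at_most_one (A :: B :: C :: D :: nil) <->
  (~(A/\B) /\ ~(A/\C) /\ ~(A/\D) /\ ~(B/\C) /\ ~(B/\D) /\ ~(C/\D)).
Proof.
  simpl; split.
  - intros [h1 [h2 [h3 [h4 _]]]].
    repeat rewrite Forall_cons_iff in *.
    intuition.
  - intros; repeat split; intros; repeat constructor; intuition.
Qed.

Lemma amo5 (A B C D E : Prop) : at_most_one (A :: B :: C :: D :: E :: nil) <->
  (~(A/\B) /\ ~(A/\C) /\ ~(A/\D) /\ ~(A/\E) /\ ~(B/\C) /\ ~(B/\D) /\ ~(B/\E)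
   /\ ~(C/\D) /\ ~(C/\E) /\ ~(D/\E)).
Proof.
  simpl; split.
  - intros [h1 [h2 [h3 [h4 [h5 _]]]]].
    repeat rewrite Forall_cons_iff in *.
    intuition.
  - intros; repeat split; intros; repeat constructor; intuition.
Qed.

Lemma vii_iff s0 s1 s2 b0 b1 b2 :
  (exists k : nat, (5 <= k <= 12)%nat /\ equality k s0 s1 s2 b0 b1 b2) <->
  (s0+s1+s2 = 2 - (b0+b1+b2) \/ s0+s1+s2 = 3/2 - (b0+b1) \/
   s0+s1+s2 = 3/2 - (b0+b2) \/ s0+s1+s2 = 3/2 - (b1+b2) \/
   s0+s1+s2 = 1 - b0 \/ s0+s1+s2 = 1 - b1 \/ s0+s1+s2 = 1 - b2 \/ s0+s1+s2 = 1).
Proof.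
  split.
  - intros [k [Hk He]].
    assert (k = 5 \/ k = 6 \/ k = 7 \/ k = 8 \/ k = 9 \/ k = 10 \/ k = 11 \/ k = 12)%nat
      as Hk' by lia.
    unfold equality, Ssum in He.
    repeat destruct Hk' as [Hk'|Hk']; subst; cbn [cond fst snd] in He; unfold Ssum in He; sdisj.
  - intros H.
    repeat destruct H as [H|H];
    [exists 5%nat | exists 6%nat | exists 7%nat | exists 8%nat | exists 9%nat
    | exists 10%nat | exists 11%nat | exists 12%nat];
    (split; [lia | unfold equality; cbn [cond fst snd]; unfold Ssum; lra]).
Qed.

Ltac elim_max :=
  repeat match goal with |- context [Rmax ?a ?b] =>
    lazymatch constr:((a,b)) with context [Rmax _ _] => fail | _ => idtac end;
    let h := fresh "hm" in destruct (Rle_or_lt a b) as [h|h];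
    [rewrite (Rmax_right a b) in * by lra | rewrite (Rmax_left a b) in * by lra] end.

Ltac solve_iff :=
  elim_max;
  (split; [intro; sdisj | intros H; repeat destruct H as [H|H]; lra]).

Lemma key s0 s1 s2 b0 b1 b2 :
  b0 + b1 + b2 >= 1/2 -> b0 + b1 >= 0 -> b0 + b2 >= 0 -> b1 + b2 >= 0 ->
  s0+s1+s2 >= 3/2 - (b0+b1) -> s0+s1+s2 >= 3/2 - (b0+b2) -> s0+s1+s2 >= 3/2 - (b1+b2) ->
  s0+s1+s2 >= 1 - b0 -> s0+s1+s2 >= 1 - b1 -> s0+s1+s2 >= 1 - b2 -> s0+s1+s2 >= 1 ->
  s1 + s2 >= - b0 -> s1 + s2 >= 0 ->
  (Rule1 b0 b1 b2 /\ Rule2_0 s0 s1 s2 b0 b1 b2 /\ Rule3_0 s0 s1 s2 b0 b1 b2) <->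
  (~(b0+b1+b2 = 1/2 /\ (b1+b2 = 0 \/ b0+b2 = 0 \/ b0+b1 = 0)) /\
   let P1 := s0+s1+s2 = 2 - (b0+b1+b2) in
   let P2 := (s0+s1+s2 = 3/2 - (b0+b1) \/ s0+s1+s2 = 3/2 - (b0+b2) \/ s0+s1+s2 = 3/2 - (b1+b2)) in
   let P3 := (s0+s1+s2 = 1 - b0 \/ s0+s1+s2 = 1 - b1 \/ s0+s1+s2 = 1 - b2 \/ s0+s1+s2 = 1) in
   let P4 := (s1+s2 = - b0 \/ s1+s2 = 0) in
   let P5 := s0 + b0 + 2*s1 + 2*s2 = 3/2 in
   let P6 := s1+s2 = 0 in
   (~(P1/\P2) /\ ~(P1/\P3) /\ ~(P1/\P4) /\ ~(P2/\P3) /\ ~(P2/\P4) /\ ~(P3/\P4)) /\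
   (~(P1/\P2) /\ ~(P1/\P3) /\ ~(P1/\P5) /\ ~(P1/\P6) /\ ~(P2/\P3) /\ ~(P2/\P5) /\ ~(P2/\P6)
   /\ ~(P3/\P5) /\ ~(P3/\P6) /\ ~(P5/\P6))).
Proof.
  intros c1 c2 c3 c4 c6 c7 c8 c9 c10 c11 c12 c16 c19.
  assert (e1 : E1eq s0 s1 s2 b0 b1 b2 <-> s0+s1+s2 = 2 - (b0+b1+b2))
    by (unfold E1eq, Ssum; split; intro; lra).
  assert (e2 : E2eq s0 s1 s2 b0 b1 b2 <-> (s0+s1+s2 = 3/2 - (b0+b1) \/ s0+s1+s2 = 3/2 - (b0+b2) \/ s0+s1+s2 = 3/2 - (b1+b2)))
    by (unfold E2eq, Ssum; solve_iff).
  assert (e3 : E3eq s0 s1 s2 b0 b1 b2 <-> (s0+s1+s2 = 1 - b0 \/ s0+s1+s2 = 1 - b1 \/ s0+s1+s2 = 1 - b2 \/ s0+s1+s2 = 1))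
    by (unfold E3eq, Ssum; solve_iff).
  assert (e4 : E4_0eq s0 s1 s2 b0 b1 b2 <-> (s1+s2 = - b0 \/ s1+s2 = 0))
    by (unfold E4_0eq, Ssum; solve_iff).
  assert (e5 : E5_0eq s0 s1 s2 b0 b1 b2 <-> s0 + b0 + 2*s1 + 2*s2 = 3/2)
    by (unfold E5_0eq, Ssum; split; intro; lra).
  assert (e6 : E6_0eq s0 s1 s2 b0 b1 b2 <-> s1+s2 = 0)
    by (unfold E6_0eq, Ssum; split; intro; lra).
  assert (r1 : Rule1 b0 b1 b2 <-> ~(b0+b1+b2 = 1/2 /\ (b1+b2 = 0 \/ b0+b2 = 0 \/ b0+b1 = 0))).
  { unfold Rule1. elim_max;
    (split; intros H [Ha Hb]; apply H; (split; [lra|]);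
     [ repeat destruct Hb as [Hb|Hb]; lra | sdisj ]). }
  unfold Rule2_0, Rule3_0. rewrite amo4, amo5, r1, e1, e2, e3, e4, e5, e6.
  cbv zeta. reflexivity.
Qed.

Theorem theorem3 (s0 s1 s2 b0 b1 b2 : R) :
  (forall k : nat, (1 <= k <= 21)%nat -> holds k s0 s1 s2 b0 b1 b2) ->
  ( (Rule1 b0 b1 b2 /\ Rule2_0 s0 s1 s2 b0 b1 b2 /\ Rule3_0 s0 s1 s2 b0 b1 b2)
    <->
    ( (* (i) *)
      (b0 = 1/2 -> strict 4 s0 s1 s2 b0 b1 b2 /\ strict 8 s0 s1 s2 b0 b1 b2 /\
                   strict 10 s0 s1 s2 b0 b1 b2 /\ strict 11 s0 s1 s2 b0 b1 b2) /\
      (* (ii) *)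
      (b1 = 1/2 -> strict 3 s0 s1 s2 b0 b1 b2 /\ strict 7 s0 s1 s2 b0 b1 b2 /\
                   strict 9 s0 s1 s2 b0 b1 b2 /\ strict 11 s0 s1 s2 b0 b1 b2) /\
      (* (iii) *)
      (b2 = 1/2 -> strict 2 s0 s1 s2 b0 b1 b2 /\ strict 6 s0 s1 s2 b0 b1 b2 /\
                   strict 9 s0 s1 s2 b0 b1 b2 /\ strict 10 s0 s1 s2 b0 b1 b2) /\
      (* (iv) *)
      (b0 + b1 = 1 \/ b0 + b2 = 1 \/ b1 + b2 = 1 \/ b0 + b1 + b2 = 1 ->
         strict 5 s0 s1 s2 b0 b1 b2) /\
      (* (v) *)
      (b0 + b1 = 1/2 -> strict 6 s0 s1 s2 b0 b1 b2) /\
      (b0 + b2 = 1/2 -> strict 7 s0 s1 s2 b0 b1 b2) /\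
      (b1 + b2 = 1/2 -> strict 8 s0 s1 s2 b0 b1 b2) /\
      (* (vi) *)
      (s0 - b0 = 5/2 - 2 * (b0 + b1 + b2) \/ s0 - b0 = 3/2 - 2 * (b0 + b1) \/
       s0 - b0 = 3/2 - 2 * (b0 + b2) \/ s0 - b0 = 1/2 - 2 * b0 \/
       s0 - b0 = 1/2 \/ s0 - b0 = 3/2 - 2 * b0 ->
         strict 13 s0 s1 s2 b0 b1 b2) /\
      (* (vii) *)
      ((exists k : nat, (5 <= k <= 12)%nat /\ equality k s0 s1 s2 b0 b1 b2) ->
         strict 16 s0 s1 s2 b0 b1 b2 /\ strict 19 s0 s1 s2 b0 b1 b2) )).

Proof.
  intros HC.
  pose proof (HC 1%nat ltac:(lia)) as c1.
  pose proof (HC 2%nat ltac:(lia)) as c2.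
  pose proof (HC 3%nat ltac:(lia)) as c3.
  pose proof (HC 4%nat ltac:(lia)) as c4.
  pose proof (HC 5%nat ltac:(lia)) as c5.
  pose proof (HC 6%nat ltac:(lia)) as c6.
  pose proof (HC 7%nat ltac:(lia)) as c7.
  pose proof (HC 8%nat ltac:(lia)) as c8.
  pose proof (HC 9%nat ltac:(lia)) as c9.
  pose proof (HC 10%nat ltac:(lia)) as c10.
  pose proof (HC 11%nat ltac:(lia)) as c11.
  pose proof (HC 12%nat ltac:(lia)) as c12.
  pose proof (HC 13%nat ltac:(lia)) as c13.
  pose proof (HC 14%nat ltac:(lia)) as c14.
  pose proof (HC 15%nat ltac:(lia)) as c15.
  pose proof (HC 16%nat ltac:(lia)) as c16.
  pose proof (HC 17%nat ltac:(lia)) as c17.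
  pose proof (HC 18%nat ltac:(lia)) as c18.
  pose proof (HC 19%nat ltac:(lia)) as c19.
  pose proof (HC 20%nat ltac:(lia)) as c20.
  pose proof (HC 21%nat ltac:(lia)) as c21.
  clear HC.
  unfold holds in *; cbn [cond fst snd] in *; unfold Ssum in *.
  rewrite (key s0 s1 s2 b0 b1 b2 c1 c2 c3 c4 c6 c7 c8 c9 c10 c11 c12 c16 c19).
  rewrite vii_iff.
  unfold strict; cbn [cond fst snd]; unfold Ssum; cbv zeta.
  split.
  - intros [r1 [[n12 [n13 [n14 [n23 [n24 n34]]]]] [m12 [m13 [m15 [m16 [m23 [m25 [m26 [m35 [m36 m56]]]]]]]]]]].
    repeat match goal with |- _ /\ _ => split end;
    intro A; destr_one A;
    repeat match goal with |- _ /\ _ => split end;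
    apply Rnot_le_gt; intro E;
    [ first [kill r1 | kill n12 | kill n23]
    | first [kill r1 | kill n12 | kill n23]
    | first [kill r1 | kill n12 | kill n23]
    | first [kill r1 | kill n12 | kill n23]
    | first [kill r1 | kill n12 | kill n23]
    | first [kill r1 | kill n12 | kill n23]
    | first [kill r1 | kill n12 | kill n23]
    | first [kill r1 | kill n12 | kill n23]
    | first [kill r1 | kill n12 | kill n23]
    | first [kill r1 | kill n12 | kill n23]
    | first [kill r1 | kill n12 | kill n23]
    | first [kill r1 | kill n12 | kill n23]
    | first [kill n13]
    | first [kill n13]
    | first [kill n13]
    | first [kill n13]
    | first [kill n23 | kill n13 | kill n12]
    | first [kill n23 | kill n13 | kill n12]
    | first [kill n23 | kill n13 | kill n12]
    | first [kill m15 | kill m25 | kill m35 | kill m56]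
    | first [kill m15 | kill m25 | kill m35 | kill m56]
    | first [kill m15 | kill m25 | kill m35 | kill m56]
    | first [kill m15 | kill m25 | kill m35 | kill m56]
    | first [kill m15 | kill m25 | kill m35 | kill m56]
    | first [kill m15 | kill m25 | kill m35 | kill m56]
    | first [kill n14 | kill n24 | kill n34]
    | first [kill n14 | kill n24 | kill n34]
    | first [kill n14 | kill n24 | kill n34]
    | first [kill n14 | kill n24 | kill n34]
    | first [kill n14 | kill n24 | kill n34]
    | first [kill n14 | kill n24 | kill n34]
    | first [kill n14 | kill n24 | kill n34]
    | first [kill n14 | kill n24 | kill n34]
    | first [kill n14 | kill n24 | kill n34]
    | first [kill n14 | kill n24 | kill n34]
    | first [kill n14 | kill n24 | kill n34]
    | first [kill n14 | kill n24 | kill n34]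
    | first [kill n14 | kill n24 | kill n34]
    | first [kill n14 | kill n24 | kill n34]
    | first [kill n14 | kill n24 | kill n34]
    | first [kill n14 | kill n24 | kill n34] ].
  - intros [h1 [h2 [h3 [h4 [h5 [h6 [h7 [h8 h9]]]]]]]].
    split; [| split; repeat match goal with |- _ /\ _ => split end].
    all: intros [A B]; destr_one A; destr_one B.
    all: first [ bk h1 | bk h2 | bk h3 | bk h4 | bk h5 | bk h6 | bk h7 | bk h8 | bk h9 ].
Qed.
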